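(* Let $F_{63}$ be the $3$-graph constructed as follows. Start with one edge $x_1x_2x_3$. For each $i\in[3]$, writing $\{s,t\}=[3]\setminus\{i\}$, add new vertices $a_i,b_i,a_i',b_i'$ and the four edges $a_ib_ix_s,\ a_ib_ix_t,\ a_i'b_i'x_s,\ a_i'b_i'x_t$. Then, for each of the $12$ pairs $xy\in\{x_ia_i,\ x_ib_i,\ x_ia_i',\ x_ib_i' : i\in[3]\}$, add four new vertices $c,d,c',d'$ (distinct from all others) and the four edges $cdx,\ cdy,\ c'd'x,\ c'd'y$. Then $F_{63}$ has $63$ vertices and $61$ edges, $F_{63}$ is $\mathcal{G}^{(3)}_6$-free, and $|P_{\le 3}(F_{63})|=165$ (namely $P_{\le3}(F_{63})$ consists of $P_1(F_{63})$ together with the $12$ pairs listed above).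
   Context: A $3$-graph is a $3$-uniform hypergraph. An $(s,k)$-configuration is a $3$-graph with exactly $k$ edges and at most $s$ vertices. $\mathcal{G}^{(3)}_6$ is the family of all $3$-graphs that are either $(8,6)$-configurations or $(\ell+1,\ell)$-configurations for some $\ell\in\{2,\dots,5\}$; a $3$-graph is $\mathcal{G}^{(3)}_6$-free if it contains no member of this family as a subgraph. For a $3$-graph $F$ and distinct vertices $x,y$, $C_F(xy)$ is the set of integers $i\geq 0$ for which there are $i$ distinct edges $X_1,\dots,X_i$ of $F$ with $|\{x,y\}\cup\bigcup_j X_j|\le i+2$. $P_1(F)$ is the set of pairs of vertices lying together in some edge, and $P_{\le t}(F)$ is the set of pairs $xy$ of vertices of $F$ with $C_F(xy)\cap\{1,\dots,t\}\neq\emptyset$. *)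

(* Defs.v *)
From mathcomp Require Import all_boot.
Set Implicit Arguments. Unset Strict Implicit. Unset Printing Implicit Defensive.

Section Hyper.
Variable V : finType.
Implicit Types (E : {set {set V}}).

Definition is_3graph E := [forall e in E, #|e| == 3].

Definition span E := \bigcup_(e in E) e.

Definition has_conf E (s k : nat) :=
  exists E' : {set {set V}}, E' \subset E /\ #|E'| = k /\ #|span E'| <= s.

Definition G6_free E :=
  ~ has_conf E 8 6 /\ forall l, 2 <= l <= 5 -> ~ has_conf E l.+1 l.

Definition inC E (p : {set V}) (i : nat) : bool :=
  [exists E' : {set {set V}},
     [&& E' \subset E, #|E'| == i & #|p :|: span E'| <= i + 2]].

Definition P1 E : {set {set V}} :=
  [set p : {set V} | (#|p| == 2) && [exists e in E, p \subset e]].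

Definition Ple (t : nat) E : {set {set V}} :=
  [set p : {set V} | (#|p| == 2) &&
     [exists i : 'I_t.+1, (0 < (i : nat)) && inC E p i]].
End Hyper.

(* Vertices:  inl (inl i)            = x_i                (i : 'I_3)
              inl (inr (i,k))        = a_i, b_i, a'_i, b'_i  for k = 0,1,2,3
              inr ((i,k), m)         = c, d, c', d' (m = 0,1,2,3) attached
                                       to the pair x_i y_(i,k)  *)
Definition V63 : finType := ('I_3 + ('I_3 * 'I_4) + (('I_3 * 'I_4) * 'I_4))%type.

Definition vX (i : 'I_3) : V63 := inl (inl i).
Definition vY (i : 'I_3) (k : nat) : V63 := inl (inr (i, inord k)).
Definition vZ (p : 'I_3 * 'I_4) (m : nat) : V63 := inr (p, inord m).

Definition pairs12 : {set {set V63}} :=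
  [set [set vX p.1; inl (inr p)] | p : 'I_3 * 'I_4].

Definition F63 : {set {set V63}} :=
  [set [set vX (inord 0); vX (inord 1); vX (inord 2)]]
  :|: [set [set vY i 0; vY i 1; vX j] | i : 'I_3, j : 'I_3 in [set j : 'I_3 | j != i]]
  :|: [set [set vY i 2; vY i 3; vX j] | i : 'I_3, j : 'I_3 in [set j : 'I_3 | j != i]]
  :|: [set [set vZ p 0; vZ p 1; u] | p : 'I_3 * 'I_4, u : V63 in [set vX p.1; inl (inr p)]]
  :|: [set [set vZ p 2; vZ p 3; u] | p : 'I_3 * 'I_4, u : V63 in [set vX p.1; inl (inr p)]].

(* Main.v *)
Require Import Defs.
From mathcomp Require Import all_boot zify.
Set Implicit Arguments. Unset Strict Implicit. Unset Printing Implicit Defensive.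
Set Warnings "-notation-overridden".

Section Gen.
Variable V : finType.

Definition I (s : seq V) : {set V} := [set x in s].

Lemma I_cat s1 s2 : I (s1 ++ s2) = I s1 :|: I s2.
Proof. by apply/setP=> x; rewrite !inE mem_cat. Qed.

Lemma I_undup s : I (undup s) = I s.
Proof. by apply/setP=> x; rewrite !inE mem_undup. Qed.

Lemma I_nil : I [::] = set0.
Proof. by apply/setP=> x; rewrite !inE. Qed.

Lemma card_I s : #|I s| = size (undup s).
Proof.
rewrite cardsE -(eq_card (mem_undup s)); exact/card_uniqP/undup_uniq.
Qed.

Definition seteqb (s1 s2 : seq V) := all (mem s2) s1 && all (mem s1) s2.

Lemma I_eq s1 s2 : (I s1 == I s2) = seteqb s1 s2.
Proof.
apply/eqP/andP => [H | [/allP H1 /allP H2]].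
  split; apply/allP => x Hx.
    have : x \in I s1 by rewrite inE.
    by rewrite H inE.
  have : x \in I s2 by rewrite inE.
  by rewrite -H inE.
apply/setP=> x; rewrite !inE; apply/idP/idP; [exact: H1 | exact: H2].
Qed.

Lemma I_eqi s1 s2 : I s1 = I s2 -> s1 =i s2.
Proof.
move=> H x; have E1 : (x \in s1) = (x \in I s1) by rewrite inE.
by rewrite E1 H inE.
Qed.

Lemma span0 : span (set0 : {set {set V}}) = set0.
Proof. by rewrite /span big_set0. Qed.

Lemma spanU1 e (E : {set {set V}}) : e \notin E -> span (e |: E) = e :|: span E.
Proof. by move=> H; rewrite /span big_setU1. Qed.

Fixpoint srch (s : nat) (acc : {set V}) (k : nat) (es : seq {set V}) {struct es} : bool :=
  match es with
  | [::] => (k == 0) && (#|acc| <= s)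
  | e :: es' => match k with
     | 0 => #|acc| <= s
     | k'.+1 => ((#|acc :|: e| <= s) && srch s (acc :|: e) k' es') || srch s acc k es'
     end
  end.

Lemma srch_complete s es : forall acc k (E' : {set {set V}}),
  {subset E' <= es} -> #|E'| = k -> #|acc :|: span E'| <= s -> srch s acc k es.
Proof.
elim: es => [|e es IH] acc k E' Hsub Hk Hs.
  have E0 : E' = set0 by apply/setP=> x; rewrite inE; apply/negbTE/negP => /Hsub.
  by move: Hk Hs; rewrite E0 cards0 span0 setU0 /= => <-.
case: k Hk => [|k] Hk /=.
  by move: Hs; move/eqP: Hk; rewrite cards_eq0 => /eqP ->; rewrite span0 setU0.
case: (boolP (e \in E')) => He.
  apply/orP; left.
  have HE : E' = e |: (E' :\ e) by rewrite setD1K.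
  have Hn : e \notin E' :\ e by rewrite !inE eqxx.
  move: Hs; rewrite HE spanU1 // setUA => Hs.
  apply/andP; split.
    by apply: leq_trans Hs; apply: subset_leq_card; apply: subsetUl.
  apply: (IH _ _ (E' :\ e)) => //.
    move=> x; rewrite !inE => /andP [Hxe /Hsub]; rewrite inE (negbTE Hxe) //.
  by move: Hk; rewrite (cardsD1 e) He add1n => -[].
apply/orP; right; apply: (IH _ _ E') => //.
move=> x Hx; have := Hsub x Hx; rewrite inE => /orP [/eqP Hxe|//].
by move: He; rewrite -Hxe Hx.
Qed.

Lemma srch_sound s es : uniq es -> forall acc k, srch s acc k es ->
  exists E' : {set {set V}}, [/\ {subset E' <= es}, #|E'| = k & #|acc :|: span E'| <= s].
Proof.
elim: es => [|e es IH] Hu acc k /=.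
  case/andP=> /eqP -> Hs; exists set0; split => //; first by move=> x; rewrite inE.
    by rewrite cards0.
  by rewrite span0 setU0.
case: k => [|k] H.
  exists set0; split => //; first by move=> x; rewrite inE.
    by rewrite cards0.
  by rewrite span0 setU0.
case/andP: Hu => Hne Hu.
case/orP: H => [/andP [H1 H2] | H].
  have [E'' [Hsub Hk Hs]] := IH Hu _ _ H2.
  have Hn : e \notin E'' by apply/negP => /Hsub; apply/negP.
  exists (e |: E''); split.
  - by move=> x; rewrite !inE => /orP [->|/Hsub ->] //; rewrite orbT.
  - by rewrite cardsU1 Hn Hk.
  - by rewrite spanU1 // setUA.
have [E'' [Hsub Hk Hs]] := IH Hu _ _ H.
exists E''; split => //.
by move=> x /Hsub; rewrite inE => ->; rewrite orbT.
Qed.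

Fixpoint ucheck (cs : seq (seq V)) :=
  if cs is c :: cs' then all (fun c' => ~~ seteqb c c') cs' && ucheck cs' else true.

Lemma ucheck_uniq cs : ucheck cs -> uniq (map I cs).
Proof.
elim: cs => //= c cs IH /andP [H1 H2]; rewrite IH // andbT.
apply/mapP => -[c' Hc' Ie].
by have := allP H1 c' Hc'; rewrite -I_eq Ie eqxx.
Qed.

Lemma card_mapI cs : ucheck cs -> #|[set e in map I cs]| = size cs.
Proof. by move=> H; rewrite cardsE (card_uniqP (ucheck_uniq H)) size_map. Qed.

End Gen.
Arguments I {V} s.

Fixpoint csrch {T : eqType} (s : nat) (acc : seq T) (k : nat) (cs : seq (seq T)) {struct cs} : bool :=
  match cs with
  | [::] => (k == 0) && (size (undup acc) <= s)
  | c :: cs' => match k with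
     | 0 => size (undup acc) <= s
     | k'.+1 => if (if size (undup (acc ++ c)) <= s then csrch s (undup (acc ++ c)) k' cs' else false)
                then true else csrch s acc k cs'
     end
  end.

Lemma ifE (b x y : bool) : (if (if b then x else false) then true else y) = (b && x) || y.
Proof. by case: b; case: x. Qed.

Lemma srch_I (V : finType) s cs : forall a k, srch s (I a) k (map (@I V) cs) = csrch s a k cs.
Proof.
elim: cs => [|c cs IH] a k /=; first by rewrite card_I.
case: k => [|k]; first by rewrite card_I.
by rewrite ifE -IH -I_cat -I_undup card_I undup_id ?undup_uniq // -IH.
Qed.

Lemma csrch_map (T T' : eqType) (f : T -> T') (finj : injective f) s cs :
  forall a k, csrch s (map f a) k (map (map f) cs) = csrch s a k cs.
Proof.
elim: cs => [|c cs IH] a k /=; first by rewrite undup_map_inj // size_map.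
case: k => [|k]; first by rewrite undup_map_inj // size_map.
by rewrite -map_cat undup_map_inj // size_map IH IH.
Qed.

Fixpoint cspans {T : eqType} (s : nat) (acc : seq T) (k : nat) (cs : seq (seq T)) {struct cs} : seq (seq T) :=
  match cs with
  | [::] => if (k == 0) && (size (undup acc) <= s) then [:: acc] else [::]
  | c :: cs' => match k with
     | 0 => if size (undup acc) <= s then [:: acc] else [::]
     | k'.+1 => (if size (undup (acc ++ c)) <= s then cspans s (undup (acc ++ c)) k' cs' else [::])
                ++ cspans s acc k cs'
     end
  end.

Section Spans.
Variable T : eqType.

Lemma size_undup_eqi (s1 s2 : seq T) : s1 =i s2 -> size (undup s1) = size (undup s2).
Proof.
move=> H; apply: perm_size; apply: uniq_perm; try exact: undup_uniq.
by move=> x; rewrite !mem_undup; exact: H.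
Qed.

Lemma size_undup_sub (s1 s2 : seq T) : {subset s1 <= s2} -> size (undup s1) <= size (undup s2).
Proof.
move=> H; apply: uniq_leq_size; first exact: undup_uniq.
by move=> x; rewrite !mem_undup; exact: H.
Qed.

Lemma csrch_eqi s cs : forall (a b : seq T) k, a =i b -> csrch s a k cs = csrch s b k cs.
Proof.
elim: cs => [|c cs IH] a b k H /=; first by rewrite (size_undup_eqi H).
case: k => [|k]; first by rewrite (size_undup_eqi H).
have H1 : a ++ c =i b ++ c by move=> x; rewrite !mem_cat H.
have H' : undup (a ++ c) =i undup (b ++ c) by move=> x; rewrite !mem_undup H1.
by rewrite (size_undup_eqi H1) (IH _ _ _ H') (IH _ _ _ H).
Qed.

Lemma cspans_sup s cs : forall (acc : seq T) k S, S \in cspans s acc k cs -> {subset acc <= S}.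
Proof.
elim: cs => [|c cs IH] acc k S /=.
  by case: ifP => // _; rewrite inE => /eqP ->.
case: k => [|k]; first by case: ifP => // _; rewrite inE => /eqP ->.
rewrite mem_cat => /orP [|/IH //].
case: ifP => // _ /IH H x Hx; apply: H; by rewrite mem_undup mem_cat Hx.
Qed.

Lemma csrch_spans s cs : forall (a acc : seq T) k,
  csrch s (a ++ acc) k cs = has (fun S => size (undup (a ++ S)) <= s) (cspans s acc k cs).
Proof.
have mono : forall (a acc : seq T), size (undup acc) <= size (undup (a ++ acc)).
  by move=> a acc; apply: size_undup_sub => x Hx; rewrite mem_cat Hx orbT.
elim: cs => [|c cs IH] a acc k /=.
  case: k => [|k] /=; last by [].
  case: ifP => H /=; first by rewrite orbF.
  apply/negbTE; rewrite -ltnNge; apply: leq_trans (mono a acc); by rewrite ltnNge H.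
case: k => [|k].
  case: ifP => H /=; first by rewrite orbF.
  apply/negbTE; rewrite -ltnNge; apply: leq_trans (mono a acc); by rewrite ltnNge H.
rewrite has_cat -IH ifE; congr orb.
have Heq : csrch s (undup ((a ++ acc) ++ c)) k cs = csrch s (a ++ undup (acc ++ c)) k cs.
  by apply: csrch_eqi => x; rewrite !mem_cat !mem_undup !mem_cat orbA.
rewrite Heq IH.
have Hsub : size (undup (acc ++ c)) <= size (undup ((a ++ acc) ++ c)).
  by rewrite -catA; apply: mono.
case: ifP => H2; last first.
  apply/negbTE; rewrite negb_and -ltnNge; apply/orP; left.
  by apply: leq_trans Hsub; rewrite ltnNge H2.
case H1: (size (undup ((a ++ acc) ++ c)) <= s) => //=.
symmetry; apply/negbTE/hasPn => S /cspans_sup HS; rewrite -ltnNge.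
apply: leq_trans (_ : size (undup ((a ++ acc) ++ c)) <= _); first by rewrite ltnNge H1.
apply: size_undup_sub => x; rewrite -catA !mem_cat => /orP [->//|Hx]; apply/orP; right.
by apply: HS; rewrite mem_undup mem_cat.
Qed.
End Spans.

Definition cord (n k : nat) : 'I_n.+1 := Ordinal (ltn_pmod k (ltn0Sn n)).
Definition sI n : seq 'I_n.+1 := [seq cord n k | k <- iota 0 n.+1].
Definition sP : seq ('I_3 * 'I_4) := [seq (i,k) | i <- sI 2, k <- sI 3].
Definition cX (i : 'I_3) : V63 := inl (inl i).
Definition cY (i : 'I_3) (k : nat) : V63 := inl (inr (i, cord 3 k)).
Definition cZ (p : 'I_3 * 'I_4) (m : nat) : V63 := inr (p, cord 3 m).
Definition Lv : seq (seq V63) :=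
  [:: [:: cX (cord 2 0); cX (cord 2 1); cX (cord 2 2)]]
 ++ [seq [:: cY i 0; cY i 1; cX j] | i <- sI 2, j <- [seq j <- sI 2 | j != i]]
 ++ [seq [:: cY i 2; cY i 3; cX j] | i <- sI 2, j <- [seq j <- sI 2 | j != i]]
 ++ [seq [:: cZ p 0; cZ p 1; u] | p <- sP, u <- [:: cX p.1; inl (inr p)]]
 ++ [seq [:: cZ p 2; cZ p 3; u] | p <- sP, u <- [:: cX p.1; inl (inr p)]].

Definition code (x : V63) : nat := match x with
 | inl (inl i) => i | inl (inr (i,k)) => 3 + 4*i + k | inr ((i,k),m) => 15 + 16*i + 4*k + m end.

Lemma code_inj : injective code.
Proof.
move=> [[i|[i k]]|[[i k] m]] [[i'|[i' k']]|[[i' k'] m']] /=;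
  have := ltn_ord i; have := ltn_ord i'; try have := ltn_ord k; try have := ltn_ord k';
  try have := ltn_ord m; try have := ltn_ord m'; move=> *; try lia.
- by have -> : i = i' by apply/val_inj.
- have E1 : i = i' :> nat by lia. have E2 : k = k' :> nat by lia.
  by rewrite (val_inj E1) (val_inj E2).
- have E1 : i = i' :> nat by lia. have E2 : k = k' :> nat by lia.
  have E3 : m = m' :> nat by lia.
  by rewrite (val_inj E1) (val_inj E2) (val_inj E3).
Qed.

Lemma cordE n k : k <= n -> cord n k = inord k.
Proof. by move=> H; apply/val_inj; rewrite /= modn_small // inordK. Qed.

Lemma vYE i k : k < 4 -> vY i k = cY i k.
Proof. by move=> H; rewrite /vY /cY cordE. Qed.

Lemma vZE p m : m < 4 -> vZ p m = cZ p m.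
Proof. by move=> H; rewrite /vZ /cZ cordE. Qed.

Lemma mem_sI n (i : 'I_n.+1) : i \in sI n.
Proof.
apply/mapP; exists (val i); first by rewrite mem_iota /= add0n ltn_ord.
by apply/val_inj; rewrite /= modn_small.
Qed.

Lemma mem_sP q : q \in sP.
Proof. by case: q => i k; apply/allpairsP; exists (i, k); rewrite !mem_sI. Qed.

Lemma I3 (a b c : V63) : I [:: a; b; c] = [set a; b; c].
Proof. by apply/setP=> x; rewrite !inE ?orbF ?orbA. Qed.

Lemma I2 (a b : V63) : I [:: a; b] = [set a; b].
Proof. by apply/setP=> x; rewrite !inE ?orbF. Qed.

Lemma imset2_seq (A B V : finType) (f : A -> B -> {set V}) (g : A -> B -> seq V)
  (D1 : mem_pred A) (D2 : A -> mem_pred B) (sA : seq A) (sB : A -> seq B) e :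
  (forall x y, I (g x y) = f x y) ->
  (forall x, in_mem x D1 = (x \in sA)) ->
  (forall x y, in_mem y (D2 x) = (y \in sB x)) ->
  (e \in imset2 f D1 D2) = (e \in map I [seq g x y | x <- sA, y <- sB x]).
Proof.
move=> Hfg H1 H2; apply/imset2P/mapP.
- case=> x y Hx Hy ->; exists (g x y); last by rewrite Hfg.
  by apply/allpairsPdep; exists x, y; rewrite -H1 -H2.
- case=> c /allpairsPdep [x [y [Hx Hy ->]]] ->; exists x y; by rewrite ?H1 ?H2 ?Hfg.
Qed.

Lemma memU5 (T : finType) (e : T) (A1 A2 A3 A4 A5 : {set T}) (s1 s2 s3 s4 s5 : seq T) :
  (e \in A1) = (e \in s1) -> (e \in A2) = (e \in s2) -> (e \in A3) = (e \in s3) ->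
  (e \in A4) = (e \in s4) -> (e \in A5) = (e \in s5) ->
  (e \in A1 :|: A2 :|: A3 :|: A4 :|: A5) = (e \in s1 ++ s2 ++ s3 ++ s4 ++ s5).
Proof. by move=> H1 H2 H3 H4 H5; rewrite !in_setU !mem_cat H1 H2 H3 H4 H5 !orbA. Qed.

Lemma F63E : F63 = [set e in map I Lv].
Proof.
apply/setP=> e. rewrite [in RHS]inE /Lv !map_cat.
apply: memU5.
- Time rewrite in_set1 [map _ _]/= mem_seq1 I3 -!cordE //.
- Time rewrite (@imset2_seq _ _ _ _ (fun i j => [:: cY i 0; cY i 1; cX j]) _ _ (sI 2)
   (fun i => [seq j <- sI 2 | j != i])) //.
  + by move=> x y; rewrite I3 !vYE.
  + by move=> x; rewrite mem_sI.
  + by move=> x y; rewrite mem_filter mem_sI andbT inE.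
- rewrite (@imset2_seq _ _ _ _ (fun i j => [:: cY i 2; cY i 3; cX j]) _ _ (sI 2)
   (fun i => [seq j <- sI 2 | j != i])) //.
  + by move=> x y; rewrite I3 !vYE.
  + by move=> x; rewrite mem_sI.
  + by move=> x y; rewrite mem_filter mem_sI andbT inE.
- rewrite (@imset2_seq _ _ _ _ (fun p u => [:: cZ p 0; cZ p 1; u]) _ _ sP
   (fun p => [:: cX p.1; inl (inr p)])) //.
  + by move=> x y; rewrite I3 !vZE.
  + by move=> x; rewrite mem_sP.
  + by move=> x y; rewrite !inE.
- rewrite (@imset2_seq _ _ _ _ (fun p u => [:: cZ p 2; cZ p 3; u]) _ _ sP
   (fun p => [:: cX p.1; inl (inr p)])) //.
  + by move=> x y; rewrite I3 !vZE.
  + by move=> x; rewrite mem_sP.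
  + by move=> x y; rewrite !inE.
Qed.

Definition Lvc := map (map code) Lv.

Lemma uLv : ucheck Lv.
Proof. by vm_compute. Qed.

Lemma card3 : all (fun c => size (undup c) == 3) Lv.
Proof. by vm_compute. Qed.

Lemma no_conf s k : csrch s [::] k Lvc = false -> ~ has_conf F63 s k.
Proof.
move=> Hc [E' [HE [Hk Hs]]].
have : srch s (I [::]) k (map I Lv).
  apply: (@srch_complete _ s _ _ _ E') => //.
  - by move=> x /(subsetP HE); rewrite F63E inE.
  - by rewrite I_nil set0U.
by rewrite srch_I -(csrch_map code_inj) Hc.
Qed.

Lemma inC_E c i : inC F63 (I c) i = csrch (i+2) (map code c) i Lvc.
Proof.
rewrite csrch_map; last exact: code_inj.
rewrite -srch_I.
apply/existsP/idP => [[E' /and3P [H1 /eqP H2 H3]] | H].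
  apply: (@srch_complete _ _ _ _ _ E') => //.
  by move=> x /(subsetP H1); rewrite F63E inE.
have [E' [Hs Hk Hsp]] := srch_sound (ucheck_uniq uLv) H.
exists E'; apply/and3P; split => //; last by rewrite Hk.
by rewrite F63E; apply/subsetP => x /Hs Hx; rewrite inE.
Qed.

Definition sV : seq V63 := [seq cX i | i <- sI 2] ++ [seq inl (inr q) | q <- sP]
  ++ [seq inr (q, m) | q <- sP, m <- sI 3].

Lemma mem_sV x : x \in sV.
Proof.
case: x => [[i|q]|[q m]]; rewrite /sV mem_cat mem_cat.
- by rewrite (map_f _ (mem_sI i)).
- by rewrite (map_f (fun q => (inl (inr q) : V63)) (mem_sP q)) orbT.
- by rewrite (allpairs_f (fun q m => (inr (q, m) : V63)) (mem_sP q) (mem_sI m)) !orbT.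
Qed.

Fixpoint pairsOf (s : seq V63) : seq (seq V63) :=
  if s is x :: s' then [seq [:: x; y] | y <- s'] ++ pairsOf s' else [::].

Lemma pairsOf_mem s u v : u \in s -> v \in s -> u != v ->
  exists2 c, c \in pairsOf s & I c = [set u; v].
Proof.
elim: s => //= x s IH; rewrite !inE => Hu Hv Huv.
case: (eqVneq u x) Hu Huv => [-> _ | Hux /= Hu] Huv.
  have Hvs : v \in s by move: Hv; rewrite eq_sym (negbTE Huv).
  exists [:: x; v]; last exact: I2.
  by rewrite mem_cat (map_f (fun y => [:: x; y]) Hvs).
case: (eqVneq v x) Hv => [-> _ | Hvx /= Hv].
  exists [:: x; u]; first by rewrite mem_cat (map_f (fun y => [:: x; y]) Hu).
  by rewrite I2; apply/setP=> z; rewrite !inE orbC.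
have [c Hc Ic] := IH Hu Hv Huv; exists c => //.
by rewrite mem_cat Hc orbT.
Qed.

Definition PA := pairsOf sV.

Definition Qc (c : seq V63) := has (fun e => all (mem e) c) Lv
  || has (fun q => seteqb c [:: cX q.1; inl (inr q)]) sP.
Definition Sp k := cspans (k + 2) [::] k Lvc.
Definition Rcx (S1 S2 S3 : seq (seq nat)) (c : seq V63) :=
  [|| has (fun S => size (undup (map code c ++ S)) <= 3) S1,
      has (fun S => size (undup (map code c ++ S)) <= 4) S2 |
      has (fun S => size (undup (map code c ++ S)) <= 5) S3].
Definition Rc c := Rcx (Sp 1) (Sp 2) (Sp 3) c.

Lemma RcE c : Rc c = [|| csrch 3 (map code c) 1 Lvc,
  csrch 4 (map code c) 2 Lvc | csrch 5 (map code c) 3 Lvc].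
Proof. by rewrite -[map code c]cats0 !csrch_spans. Qed.
Definition Lq := filter Qc PA.

Lemma check1' : (fun S1 S2 S3 => all (fun c => (size (undup c) == 2) && (Rcx S1 S2 S3 c == Qc c)) PA)
  (Sp 1) (Sp 2) (Sp 3).
Proof. by vm_compute. Qed.

Lemma check1 : all (fun c => (size (undup c) == 2) && (Rc c == Qc c)) PA.
Proof. exact: check1'. Qed.

Lemma check2 : ucheck Lq && (size Lq == 165).
Proof. by vm_compute. Qed.

Lemma Qc_eqi c c' : c =i c' -> Qc c = Qc c'.
Proof.
move=> H; rewrite /Qc /seteqb; congr orb; apply: eq_has => x /=.
  exact: (eq_all_r H).
congr andb; first exact: (eq_all_r H).
by rewrite !H.
Qed.

Lemma key (p : {set V63}) : #|p| == 2 -> exists2 c, c \in PA & p = I c.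
Proof.
case/cards2P => u [v [uv ->]].
by have [c Hc Ic] := pairsOf_mem (mem_sV u) (mem_sV v) uv; exists c.
Qed.

Lemma cardPA c : c \in PA -> #|I c| == 2.
Proof. by move=> Hc; have /andP [H _] := allP check1 c Hc; rewrite card_I. Qed.

Lemma RQ c : c \in PA -> Rc c = Qc c.
Proof. by move=> Hc; have /andP [_ /eqP H] := allP check1 c Hc. Qed.

Lemma memLq c : c \in PA -> (I c \in map I Lq) = Qc c.
Proof.
move=> Hc; apply/mapP/idP => [[c' Hc' /I_eqi Heq] | HQ]; last first.
  by exists c => //; rewrite mem_filter HQ.
by move: Hc'; rewrite mem_filter => /andP [HQ _]; rewrite (Qc_eqi Heq).
Qed.

Lemma notLq (p : {set V63}) : #|p| != 2 -> (p \in map I Lq) = false.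
Proof.
move=> Hp; apply/mapP => -[c Hc E]; move: Hc; rewrite mem_filter => /andP [_ /cardPA].
by rewrite -E (negbTE Hp).
Qed.

Lemma ex4 (P : nat -> bool) : [exists i : 'I_4, (0 < i) && P i] = [|| P 1, P 2 | P 3].
Proof.
apply/existsP/idP.
  by case=> -[[|[|[|[|n]]]] Hi] //= ->; rewrite ?orbT.
move=> /orP [H|/orP [H|H]].
- by exists (@Ordinal 4 1 isT).
- by exists (@Ordinal 4 2 isT).
- by exists (@Ordinal 4 3 isT).
Qed.

Lemma PleE : Ple 3 F63 = [set e in map I Lq].
Proof.
apply/setP => p; rewrite [in RHS]inE /Ple inE.
case: (boolP (#|p| == 2)) => Hp; last by rewrite notLq.
rewrite andTb; have [c Hc ->] := key Hp.
by rewrite memLq // ex4 !inC_E -RQ // RcE.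
Qed.

Lemma P1pE : P1 F63 :|: pairs12 = [set e in map I Lq].
Proof.
apply/setP => p; rewrite [in RHS]inE in_setU /P1 inE.
case: (boolP (#|p| == 2)) => Hp; last first.
  rewrite notLq // andFb orFb; apply/negbTE/imsetP => -[q _ Eq]; move: Hp; by rewrite Eq cards2.
rewrite andTb; have [c Hc ->] := key Hp.
rewrite memLq // /Qc; congr orb.
  apply/existsP/hasP => [[e /andP [He Hsub]] | [c' Hc' Hall]].
    move: He; rewrite F63E inE => /mapP [c' Hc' Ee]; exists c' => //.
    apply/allP => x Hx; have : x \in I c by rewrite inE.
    by move/(subsetP Hsub); rewrite Ee inE.
  exists (I c'); apply/andP; split; first by rewrite F63E inE; exact: map_f.
  by apply/subsetP => x; rewrite !inE => Hx; exact: (allP Hall).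
apply/imsetP/hasP => [[q _ Eq] | [q _ Hq]].
  exists q; first exact: mem_sP.
  by rewrite -I_eq Eq I2.
exists q => //; apply/eqP; rewrite -I2 I_eq; exact: Hq.
Qed.

Theorem mainTheorem9 :
  [/\ #|[set: V63]| = 63,
      #|F63| = 61,
      is_3graph F63,
      G6_free F63
    & #|Ple 3 F63| = 165 /\ Ple 3 F63 = P1 F63 :|: pairs12].
Proof.
split.
- by rewrite cardsT /V63 !card_sum !card_prod !card_ord.
- rewrite F63E (card_mapI uLv); by vm_compute.
- apply/forall_inP => e; rewrite F63E inE => /mapP [c Hc ->].
  by rewrite card_I; exact: (allP card3 c Hc).
- split; first by apply: no_conf; vm_compute.
  move=> l /andP [H1 H2]; case: l H1 H2 => [|[|[|[|[|[|l]]]]]] // _ _; apply: no_conf; by vm_compute.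
- case/andP: check2 => H1 /eqP H2.
  rewrite PleE P1pE (card_mapI H1) H2; by split.
Qed.
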